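(* Let $u=[u_i]_{i\in[n]}$ ($n\in\{1,2,\dots\}\cup\{\infty\}$) be an invertible row operator on $\mathcal H$ with inverse $v=[v_i]_{i\in[n]}^t$, and let $\alpha$ be the endomorphism of $B(\mathcal H)$ given by $\alpha(x)=\sum_{i\in[n]}u_ixv_i$. Then for any $x,y\in B(\mathcal H)$: $\alpha(x)y=y\alpha(x)$ if and only if $x\,v_jyu_k=v_jyu_k\,x$ for all $j,k\in[n]$.
   Context: A row $u=[u_i]_{i\in[n]}\in B(\mathcal H\otimes\ell^2(n),\mathcal H)$ is invertible with inverse the column $v=[v_i]^t\in B(\mathcal H,\mathcal H\otimes\ell^2(n))$ if $vu=I_{\mathcal H\otimes\ell^2(n)}$ (equivalently $v_iu_j=\delta_{ij}I$) and $\sum_iu_iv_i=I_{\mathcal H}$ (strong operator topology). *)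

(* Defs.v *)
From HB Require Import structures.
From mathcomp Require Import all_boot all_order all_algebra.
From mathcomp Require Import all_classical all_reals all_analysis.
From mathcomp Require Import complex sesquilinear.
Set Implicit Arguments. Unset Strict Implicit. Unset Printing Implicit Defensive.
Import Order.TTheory GRing.Theory Num.Theory.
Import numFieldNormedType.Exports.
Local Open Scope ring_scope.
Local Open Scope complex_scope.
Local Open Scope classical_set_scope.

(* The index set [n] for n in {1,2,...} ∪ {∞}: n = Some m means [n] = {0,...,m-1},
   n = None means [n] = ℕ (n = ∞). *)
Definition in_idx (n : option nat) (i : nat) : bool :=
  if n is Some m then (i < m)%N else true.

Definition induces_norm (R : realType) (H : completeNormedModType R[i])
  (ip : {dot H for Num.conj}) : Prop :=
  forall h : H, (Num.norm h) ^+ 2 = ip h h.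

Definition bounded_op (R : realType) (H : completeNormedModType R[i])
  (x : H -> H) : Prop := linear x /\ continuous x.

Definition psum (R : realType) (H : completeNormedModType R[i])
  (n : option nat) (f : nat -> H) (N : nat) : H :=
  \sum_(0 <= i < N | in_idx n i) f i.

(* The row u = [u_i]_{i∈[n]} is a bounded operator H ⊗ ℓ²(n) -> H,
   (ξ_i)_i ↦ Σ_i u_i ξ_i: each u_i ∈ B(H) and there is C with
   ‖Σ_i u_i ξ_i‖² ≤ C Σ_i ‖ξ_i‖² for every finitely supported ξ. *)
Definition row_op (R : realType) (H : completeNormedModType R[i])
  (n : option nat) (u : nat -> H -> H) : Prop :=
  (forall i, in_idx n i -> bounded_op (u i)) /\
  exists C : R, forall (xi : nat -> H) (N : nat),
    (Num.norm (psum n (fun i => u i (xi i)) N)) ^+ 2 <=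
    C%:C * \sum_(0 <= i < N | in_idx n i) (Num.norm (xi i)) ^+ 2.

(* The column v = [v_i]^t is a bounded operator H -> H ⊗ ℓ²(n),
   h ↦ (v_i h)_i: each v_i ∈ B(H) and Σ_i ‖v_i h‖² ≤ C ‖h‖². *)
Definition col_op (R : realType) (H : completeNormedModType R[i])
  (n : option nat) (v : nat -> H -> H) : Prop :=
  (forall i, in_idx n i -> bounded_op (v i)) /\
  exists C : R, forall (h : H) (N : nat),
    \sum_(0 <= i < N | in_idx n i) (Num.norm (v i h)) ^+ 2 <=
    C%:C * (Num.norm h) ^+ 2.

(* The row u is invertible with inverse the column v:
   v_i u_j = δ_ij I and Σ_i u_i v_i = I in the strong operator topology. *)
Definition row_inverse (R : realType) (H : completeNormedModType R[i])
  (n : option nat) (u v : nat -> H -> H) : Prop :=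
  row_op n u /\ col_op n v /\
  (forall i j, in_idx n i -> in_idx n j ->
     v i \o u j = if i == j then id else (fun _ => 0)) /\
  (forall h : H, psum n (fun i => u i (v i h)) @ \oo --> h).

Definition alpha (R : realType) (H : completeNormedModType R[i])
  (n : option nat) (u v : nat -> H -> H) (x : H -> H) : H -> H :=
  fun h => lim (psum n (fun i => u i (x (v i h))) @ \oo).

(* Main.v *)
Require Import Defs.
From HB Require Import structures.
From mathcomp Require Import all_boot all_order all_algebra.
From mathcomp Require Import all_classical all_reals all_analysis.
From mathcomp Require Import complex sesquilinear.
From mathcomp Require Import lra.
Import Order.TTheory GRing.Theory Num.Theory.
Import numFieldNormedType.Exports.
Set Implicit Arguments. Unset Strict Implicit. Unset Printing Implicit Defensive.
Local Open Scope ring_scope.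
Local Open Scope classical_set_scope.

Section Aux.
Variables (R : realType) (H : completeNormedModType R[i]).

Definition nr (h : H) : R := complex.Re `|h|.

Lemma ge0_RE (z : R[i]) : 0 <= z -> z = (complex.Re z)%:C%C.
Proof. by move=> z0; rewrite [LHS]complexE (ger0_Im z0) mulr0 addr0. Qed.

Lemma normE (h : H) : `|h| = (nr h)%:C%C.
Proof. exact: ge0_RE. Qed.

Lemma nr_ge0 (h : H) : 0 <= nr h.
Proof. by move: (normr_ge0 h); rewrite lecE => /andP [_]. Qed.

Lemma nr0 : nr 0 = 0.
Proof. by rewrite /nr normr0. Qed.

Lemma lin0 (f : H -> H) : linear f -> f 0 = 0.
move=> lf; have := lf 1 0 0; rewrite !scale1r addr0 => E.
have F: f 0 + f 0 = f 0 + 0 by rewrite addr0 -E.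
exact: addrI F.
Qed.

Lemma linD (f : H -> H) : linear f -> forall a b, f (a + b) = f a + f b.
Proof. by move=> lf a b; have := lf 1 a b; rewrite !scale1r. Qed.

Lemma lin_sum (f : H -> H) : linear f -> forall (r : seq nat) (P : pred nat) (F : nat -> H),
  f (\sum_(i <- r | P i) F i) = \sum_(i <- r | P i) f (F i).
Proof.
move=> lf r P F; apply: (big_rec2 (fun a b => f a = b)); first exact: lin0.
by move=> i a b _ <-; rewrite linD.
Qed.

Lemma bnd (x : H -> H) :
  bounded_op x -> exists K : R, 0 < K /\ forall z, nr (x z) <= K * nr z.
Proof.
move=> [lin cont].
pose xl : {linear H -> H} := HB.pack x (GRing.isLinear.Build R[i] H H *:%R x lin).
have : continuous xl by [].
move/linear_bounded_continuous/linear_boundedP => [M [Mr HM]].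
have h1 : 0 < `|M| + 1 by apply: ltr_wpDl (normr_ge0 M) ltr01.
have K0 := @ge0_RE (`|M| + 1) (ltW h1).
exists (complex.Re (`|M| + 1)); split; first by rewrite -ltcR -K0.
move=> z; rewrite -lecR rmorphM /= -K0 -!normE; apply: (HM (`|M|+1)).
by apply: le_lt_trans (real_ler_norm Mr) _; rewrite ltrDl ltr01.
Qed.

Lemma sum_tail (V : zmodType) (P : pred nat) (F : nat -> V) (N M : nat) : (N <= M)%N ->
  \sum_(0 <= i < M | P i) (if (N <= i)%N then F i else 0) =
  \sum_(0 <= i < M | P i) F i - \sum_(0 <= i < N | P i) F i.
Proof.
move=> NM.
rewrite !(big_cat_nat (leq0n N) NM) /=.
rewrite [X in X + _ = _]big_nat_cond big1; last first.
  by move=> i /andP [/andP [_ iN] _]; rewrite leqNgt iN.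
rewrite add0r [X in _ = X - _]addrC addrK.
rewrite big_nat_cond [RHS]big_nat_cond; apply: eq_bigr => i /andP [/andP [-> _] _] //.
Qed.

Lemma row_real (n : option nat) (u : nat -> H -> H) : row_op n u ->
  exists C : R, forall (xi : nat -> H) (N : nat),
    nr (psum n (fun i => u i (xi i)) N) ^+ 2 <=
    C * \sum_(0 <= i < N | in_idx n i) nr (xi i) ^+ 2.
Proof.
move=> [_ [C HC]]; exists C => xi N; rewrite -lecR !rmorphM rmorph_sum /= -normE -expr2.
by apply: le_trans (HC xi N) _; under eq_bigr do rewrite rmorphXn /= -normE.
Qed.

Lemma col_real (n : option nat) (v : nat -> H -> H) : col_op n v ->
  exists C : R, forall (h : H) (N : nat),
    \sum_(0 <= i < N | in_idx n i) nr (v i h) ^+ 2 <= C * nr h ^+ 2.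
Proof.
move=> [_ [C HC]]; exists C => h N; rewrite -lecR !rmorphM rmorph_sum /= -normE -expr2.
by apply: le_trans (HC h N); under eq_bigr do rewrite rmorphXn /= -normE.
Qed.

Lemma fin_ineq {a C tM tN L e : R}: 0 <= a -> 0 < e ->
  a ^+ 2 <= C * (tM - tN) -> tN <= tM -> tM <= L -> `|L - tN| < e ^+ 2 / (`|C| + 1) -> a < e.
Proof.
move=> a0 e0 h1 h2 h3 h4.
have D0 : 0 < `|C| + 1 by apply: ltr_wpDl (normr_ge0 C) ltr01.
have h5 : `|L - tN| * (`|C| + 1) < e ^+ 2 by rewrite -ltr_pdivlMr.
have h6 : L - tN <= `|L - tN| := ler_norm _.
have h7 : C <= `|C| := ler_norm _.
have h8 : C * (tM - tN) <= (`|C| + 1) * (tM - tN) by apply: ler_wpM2r; lra.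
have h9 : (`|C| + 1) * (tM - tN) <= (`|C| + 1) * `|L - tN| by apply: ler_wpM2l; lra.
nra.
Qed.

Lemma row_cvg (n : option nat) (u : nat -> H -> H) (hu : row_op n u)
  (xi : nat -> H) (B : R) :
  (forall N, \sum_(0 <= i < N | in_idx n i) nr (xi i) ^+ 2 <= B) ->
  cvg (psum n (fun i => u i (xi i)) @ \oo).
Proof.
move=> HB.
have [C HC] := @row_real n u hu.

have u0 : forall i, in_idx n i -> u i 0 = 0 by move=> i /(hu.1 i) [/lin0].
pose t := fun N => \sum_(0 <= i < N | in_idx n i) nr (xi i) ^+ 2.
have tnd : {homo t : a b / (a <= b)%N >-> a <= b}.
  move=> a b ab; rewrite /t (big_cat_nat (leq0n a) ab) /= lerDl.
  by apply: sumr_ge0 => i _; exact: sqr_ge0.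
have tc : cvgn t.
  by apply: nondecreasing_is_cvgn => //; exists B => _ [N _ <-]; exact: HB.
have tL := nondecreasing_cvgn_le tnd tc.
apply: cauchy_cvg; apply: cauchy_exP => eps eps0.
have eE := @ge0_RE eps (ltW eps0).
have e0 : 0 < complex.Re eps by rewrite -ltcR -eE.
have D0 : 0 < `|C| + 1 by apply: ltr_wpDl (normr_ge0 C) ltr01.
have d0 : 0 < (complex.Re eps) ^+ 2 / (`|C| + 1) by rewrite divr_gt0 // exprn_gt0.
have := (cvgrPdist_lt _ _).1 tc _ d0.
move=> [N _ HN]; have HNN := HN N (leqnn N).
exists (psum n (fun i => u i (xi i)) N).
exists N => // M /= NM.
rewrite -ball_normE /ball_ /= distrC.
have key : psum n (fun i => u i (xi i)) M - psum n (fun i => u i (xi i)) N =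
    psum n (fun i => u i (if (N <= i)%N then xi i else 0)) M.
  rewrite /psum -sum_tail //; apply: eq_bigr => k nk /=; case: (N <= k)%N => //; by rewrite u0.
have key2 : t M - t N = \sum_(0 <= i < M | in_idx n i) nr (if (N <= i)%N then xi i else 0) ^+ 2.
  rewrite /t -sum_tail //; apply: eq_bigr => k _ /=; case: (N <= k)%N => //; rewrite nr0 expr0n //=.
have h1 := HC (fun i => if (N <= i)%N then xi i else 0) M.
rewrite -key -key2 in h1.
rewrite eE normE ltcR.
exact: (fin_ineq (nr_ge0 _) e0 h1 (tnd _ _ NM) (tL M) HNN).
Qed.


Lemma sum_delta (V : zmodType) (P : pred nat) (F : nat -> V) (k M : nat) :
  P k -> (k < M)%N ->
  \sum_(0 <= i < M | P i) (if i == k then F i else 0) = F k.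
Proof.
move=> Pk kM; rewrite big_mkcond /= (bigD1_seq k) ?iota_uniq ?mem_index_iota //=.
rewrite Pk eqxx big1 ?addr0 // => i ik; rewrite (negbTE ik); by case: (P i).
Qed.

End Aux.

Unset Implicit Arguments.
Local Close Scope classical_set_scope.

Theorem proposition3p6 (R : realType) (H : completeNormedModType R[i])
  (ip : {dot H for Num.conj}) (Hip : induces_norm ip)
  (n : option nat) (Hn : n <> Some 0%N)
  (u v : nat -> H -> H) (Huv : row_inverse n u v)
  (x y : H -> H) (Hx : bounded_op x) (Hy : bounded_op y) :
  (alpha n u v x \o y = y \o alpha n u v x) <->
  (forall j k : nat, in_idx n j -> in_idx n k ->
     x \o (v j \o y \o u k) = (v j \o y \o u k) \o x).
Proof.
Local Open Scope classical_set_scope.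
move: Huv => [hu [hv [hvu hsum]]].
have hd := @norm_hausdorff _ H.
have [K [K0 HK]] := bnd Hx.
have [Cv HCv] := col_real hv.
have HA : forall h, psum n (fun i => u i (x (v i h))) @ \oo --> alpha n u v x h.
  move=> h; apply: (@row_cvg _ _ n u hu (fun i => x (v i h)) (K ^+ 2 * (Cv * nr h ^+ 2))) => N.
  apply: (@le_trans _ _ (K ^+ 2 * \sum_(0 <= i < N | in_idx n i) nr (v i h) ^+ 2)).
    rewrite mulr_sumr; apply: ler_sum => i _.
    have := HK (v i h); have := nr_ge0 (x (v i h)); have := nr_ge0 (v i h); nra.
  by apply: ler_wpM2l; [exact: sqr_ge0 | exact: HCv].
have vuE : forall i k z, in_idx n i -> in_idx n k ->
    v i (u k z) = if i == k then z else 0.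
  move=> i k z ni nk; have := congr1 (fun f => f z) (hvu i k ni nk) => /= ->.
  by case: (i == k).
have u0 : forall i, in_idx n i -> u i 0 = 0 by move=> i /(hu.1 i) [/lin0].
have v0 : forall i, in_idx n i -> v i 0 = 0 by move=> i /(hv.1 i) [/lin0].
have x0 : x 0 = 0 by apply: lin0; case: Hx.
have Fact1 : forall k z, in_idx n k -> alpha n u v x (u k z) = u k (x z).
  move=> k z nk; rewrite /alpha; apply: cvg_lim => //; apply: cvg_near_cst.
  exists k.+1 => // M /= kM.
  rewrite /psum (eq_bigr (fun i => if i == k then u k (x z) else 0)).
    exact: sum_delta.
  move=> i ni; rewrite vuE //; case: eqP => [-> //|_]; by rewrite x0 u0.
have Fact2 : forall j w, in_idx n j -> v j (alpha n u v x w) = x (v j w).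
  move=> j w nj.
  pose proof (continuous_cvg _ ((hv.1 j nj).2 _) (HA w)) as c1.
  apply: (@cvg_unique H hd _ _ _ _ c1); apply: cvg_near_cst.
  exists j.+1 => // M /= jM.
  rewrite /psum lin_sum; last by case: (hv.1 j nj).
  rewrite (eq_bigr (fun i => if i == j then x (v i w) else 0)).
    exact: sum_delta.
  by move=> i ni; rewrite vuE // eq_sym; case: eqP => [-> //|_].
split.
  move=> E j k nj nk; apply: funext => z /=.
  rewrite -Fact2 //.
  have := congr1 (fun f => f (u k z)) E => /= ->.
  by rewrite Fact1.
move=> comm; apply: funext => h /=.
set a := alpha n u v x h.
have step : forall i, in_idx n i -> x (v i (y h)) = v i (y a).
  move=> i ni.
  have cy := Hy.2; have cv := (hv.1 i ni).2; have cx := Hx.2.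
  pose proof (continuous_cvg _ (cx _) (continuous_cvg _ (cv _) (continuous_cvg _ (cy _) (hsum h)))) as c1.
  pose proof (continuous_cvg _ (cv _) (continuous_cvg _ (cy _) (HA h))) as c2.
  have E : (x \o (v i \o (y \o psum n (fun i => u i (v i h))))) =
           (v i \o (y \o psum n (fun i => u i (x (v i h))))).
    apply: funext => M /=.
    rewrite /psum lin_sum; last by case: Hy.
    rewrite lin_sum; last by case: (hv.1 i ni).
    rewrite lin_sum; last by case: Hx.
    rewrite lin_sum; last by case: Hy.
    rewrite lin_sum; last by case: (hv.1 i ni).
    apply: eq_bigr => k nk.
    by have := congr1 (fun f => f (v k h)) (comm i k ni nk).
  rewrite E in c1.
  exact: (@cvg_unique H hd _ _ _ _ c1 c2).
rewrite /alpha.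
have E2 : psum n (fun i => u i (x (v i (y h)))) = psum n (fun i => u i (v i (y a))).
  apply: funext => M; rewrite /psum; apply: eq_bigr => i ni; by rewrite step.
rewrite E2; apply: cvg_lim => //; exact: hsum.
Qed.
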